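(* In the ring $S$ (defined in the context), for every triple $(a,b,c)\neq(0,0,0)$ of nonnegative integers and every finite multiset $\Lambda$ of triples, we have \begin{align*} \bar m_{(a,b,c)}\bar m_{\Lambda}=&(u_{(a,b,c)}+1)\bar m_{(a,b,c)\Lambda}+\sum_{\substack{u_{(i,j,k)}>0\\ c+k\leq r-1}}(u_{(a+i,b+j,c+k)}+1)\bar m_{(a+i,b+j,c+k)\Lambda-(i,j,k)}\\ &+\sum_{\substack{u_{(i,j,k)}>0\\ c+k\geq r}}(u_{(a+i+1,b+j+1,c+k-r)}+1)\bar m_{(a+i+1,b+j+1,c+k-r)\Lambda-(i,j,k)}, \end{align*} where $u_{(i,j,k)}$ denotes the multiplicity of $(i,j,k)$ in $\Lambda$ and the sums run over the distinct triples $(i,j,k)$ occurring in $\Lambda$.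
   Context: Fix $r\geq1$. For $n\geq1$ let $R_n=\mathbb{C}[x_1,\dots,x_n,y_1,\dots,y_n,z_1,\dots,z_n]$ with $S_n$ permuting indices simultaneously, $I_n=(x_iy_i-z_i^r)_{i=1}^n$, $I_n^{S_n}=I_n\cap R_n^{S_n}$. The maps $R_{n+1}^{S_{n+1}}\to R_n^{S_n}$ set $x_{n+1}=y_{n+1}=z_{n+1}=0$; let $S'=\varprojlim R_n^{S_n}$ and $S=\varprojlim R_n^{S_n}/I_n^{S_n}$ (graded projective limits). For a finite multiset $\Lambda=(a_1,b_1,c_1)\cdots(a_l,b_l,c_l)$ of triples of nonnegative integers, none equal to $(0,0,0)$, $m_\Lambda\in S'$ is the element whose image in $R_n^{S_n}$ is the sum of all distinct monomials obtained from $x_1^{a_1}y_1^{b_1}z_1^{c_1}\cdots x_l^{a_l}y_l^{b_l}z_l^{c_l}$ by permuting indices (zero if $l>n$), and $\bar m_\Lambda$ is its image in $S$. Write $l(\Lambda)=l$, $(a,b,c)\Lambda$ for the multiset with $(a,b,c)$ added, and $\Lambda-(i,j,k)$ for the multiset with one copy of $(i,j,k)$ removed. *)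

(* Defs.v *)
From HB Require Import structures.
From mathcomp Require Import all_boot all_algebra fingroup perm.
From mathcomp Require Import reals.
From mathcomp Require Import complex.
From mathcomp Require Import mpoly.
Set Implicit Arguments. Unset Strict Implicit. Unset Printing Implicit Defensive.
Import GRing.Theory.
Local Open Scope ring_scope.

(* triples (a,b,c) are encoded as ((a,b),c) : nat * nat * nat *)
Notation triple := (nat * nat * nat)%type.

(* R_n = C[x_1..x_n, y_1..y_n, z_1..z_n] is {mpoly R[i][3*n]}, with
   x_i = 'X_(i), y_i = 'X_(n+i), z_i = 'X_(2n+i) (0-based i < n). *)
Lemma varidx_proof (n : nat) (k : 'I_3) (i : 'I_n) : (k * n + i < 3 * n)%N.
Proof.
case: k => k /= hk; case: i => i /= hi.
have h1 : (k * n + i < k * n + n)%N by rewrite ltn_add2l.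
apply: (leq_trans h1).
have -> : (k * n + n = k.+1 * n)%N by rewrite mulSn addnC.
by rewrite leq_mul2r hk orbT.
Qed.

Definition varidx (n : nat) (k : 'I_3) (i : 'I_n) : 'I_(3 * n) :=
  Ordinal (varidx_proof k i).

Section Ring.
Variable R : realType.
Local Notation C := (R[i]).

Definition xv (n : nat) (i : 'I_n) : {mpoly C[3 * n]} := 'X_(varidx (0 : 'I_3) i).
Definition yv (n : nat) (i : 'I_n) : {mpoly C[3 * n]} := 'X_(varidx (1 : 'I_3) i).
Definition zv (n : nat) (i : 'I_n) : {mpoly C[3 * n]} := 'X_(varidx (2 : 'I_3) i).

Definition permmono (n : nat) (L : seq triple) (s : 'S_n) : {mpoly C[3 * n]} :=
  \prod_(t < n | (t < size L)%N)
     (xv (s t) ^+ (nth (0,0,0)%N L t).1.1 *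
      yv (s t) ^+ (nth (0,0,0)%N L t).1.2 *
      zv (s t) ^+ (nth (0,0,0)%N L t).2).

(* image of m_L in R_n^{S_n}: sum of all distinct monomials obtained by
   permuting indices; zero if l(L) > n *)
Definition mLam (n : nat) (L : seq triple) : {mpoly C[3 * n]} :=
  if (size L <= n)%N then
    \sum_(p <- undup [seq permmono L s | s : 'S_n]) p
  else 0.

Definition in_In (r n : nat) (p : {mpoly C[3 * n]}) : Prop :=
  exists q : 'I_n -> {mpoly C[3 * n]},
    p = \sum_(i < n) q i * (xv i * yv i - zv i ^+ r).

End Ring.
Arguments mLam R n L : clear implicits.

(* Main.v *)
Require Import Defs.
From HB Require Import structures.
From mathcomp Require Import all_boot all_algebra fingroup perm.
From mathcomp Require Import reals.
From mathcomp Require Import complex.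
From mathcomp Require Import mpoly.
From mathcomp Require Import ring zify.
Set Implicit Arguments. Unset Strict Implicit. Unset Printing Implicit Defensive.
Import GRing.Theory.
Local Open Scope ring_scope.

Section Comb.
Variable n : nat.
Local Notation ffT := {ffun 'I_n -> triple}.
Local Notation z0 := ((0,0,0)%N : triple).

Definition cod (f : ffT) := [seq f i | i <- enum 'I_n].
Definition upd (f : ffT) (j : 'I_n) (t : triple) : ffT :=
  [ffun i => if i == j then t else f i].
Definition gfun (P : seq triple) (s : 'S_n) : ffT :=
  [ffun i => nth z0 P (s^-1%g i)].
Definition OrbP (P : seq triple) :=
  [seq f <- undup [seq gfun P s | s <- enum {perm 'I_n}] | perm_eq (cod f) P].

Lemma memOrb P f : (f \in OrbP P) = perm_eq (cod f) P.
Proof.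
rewrite mem_filter; case: (boolP (perm_eq _ _)) => //= H.
rewrite mem_undup; apply/mapP.
have Ht : perm_eq P [tuple f i | i < n].
  by rewrite perm_sym; rewrite /cod -val_ord_tuple in H.
have [p Hp] := tuple_permP Ht.
exists p; first by rewrite mem_enum.
apply/ffunP => k; rewrite ffunE Hp.
by rewrite nth_mktuple permKV tnth_mktuple.
Qed.

Lemma uniq_OrbP P : uniq (OrbP P).
Proof. by rewrite filter_uniq // undup_uniq. Qed.

Lemma OrbP_perm (V : nmodType) (F : ffT -> V) P P' : perm_eq P P' ->
  \sum_(f <- OrbP P) F f = \sum_(f <- OrbP P') F f.
Proof.
move=> HP; apply: perm_big; apply: uniq_perm; rewrite ?uniq_OrbP // => f.
by rewrite !memOrb (permPr HP).
Qed.



Lemma perm_swap2 (T : eqType) (x y : T) s : perm_eq (x :: y :: s) (y :: x :: s).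
Proof. by rewrite -[x :: _]cat1s -[y :: s]cat1s -[y :: _]cat1s -[x :: s]cat1s perm_catCA. Qed.

Lemma cod_upd (f : ffT) (j : 'I_n) (t : triple) : perm_eq (f j :: cod (upd f j t)) (t :: cod f).
Proof.
have He := perm_to_rem (mem_enum 'I_n j).
set X := [seq f i | i <- rem j (enum 'I_n)].
have H1 : perm_eq (cod f) (f j :: X) by exact: (perm_map f He).
have H2 : perm_eq (cod (upd f j t)) (t :: X).
  rewrite /cod (permPl (perm_map _ He)) /= ffunE eqxx perm_cons.
  suff -> : [seq upd f j t i | i <- rem j (enum 'I_n)] = X by [].
  apply/eq_in_map => i; rewrite mem_rem_uniq ?enum_uniq // inE => /andP[/negbTE Hi _].
  by rewrite ffunE Hi.
apply: (perm_trans (y := f j :: t :: X)); first by rewrite perm_cons.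
apply: (perm_trans (perm_swap2 _ _ _)); by rewrite perm_cons perm_sym.
Qed.

Lemma orb_upd (f : ffT) (j : 'I_n) (l : triple) Q b : perm_eq (cod f) (l :: Q) -> f j = l ->
  perm_eq (cod (upd f j b)) (b :: Q).
Proof.
move=> Hf Hj; rewrite -(perm_cons l).
have := cod_upd f j b; rewrite Hj => H.
apply: (perm_trans H); apply: (perm_trans _ (perm_swap2 _ _ _)).
by rewrite perm_cons.
Qed.

Lemma sum_const_cnt (V : nmodType) (I : Type) (s : seq I) (P : pred I) (x : V) :
  \sum_(i <- s | P i) x = x *+ count P s.
Proof.
elim: s => [|y s IH]; first by rewrite big_nil.
by rewrite big_cons /= IH; case: (P y); rewrite //= mulrS.
Qed.

Lemma memPL P (l : triple) (f : ffT) (j : 'I_n) :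
  ((f, j) \in [seq (f, j) | f : ffT <- OrbP P, j : 'I_n <- [seq j <- enum 'I_n | f j == l]])
  = perm_eq (cod f) P && (f j == l).
Proof.
apply/allpairsPdep/andP.
  move=> [f' [j' [Hf Hj [-> ->]]]]; rewrite mem_filter in Hj.
  by case/andP: Hj => -> _; rewrite -memOrb.
move=> [Hf Hj]; exists f, j; split => //; first by rewrite memOrb.
by rewrite mem_filter Hj mem_enum.
Qed.

Lemma G_abs (V : nmodType) (F : ffT -> V) P Q (l b : triple) :
  perm_eq P (l :: Q) -> b != l ->
  \sum_(f <- OrbP P) \sum_(j <- enum 'I_n | f j == l) F (upd f j b)
  = (\sum_(g <- OrbP (b :: Q)) F g) *+ count_mem b (b :: Q).
Proof.
move=> HP Hbl.
set PL := [seq (f, j) | f : ffT <- OrbP P, j : 'I_n <- [seq j <- enum 'I_n | f j == l]].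
set PL' := [seq (f, j) | f : ffT <- OrbP (b :: Q), j : 'I_n <- [seq j <- enum 'I_n | f j == b]].
have -> : \sum_(f <- OrbP P) \sum_(j <- enum 'I_n | f j == l) F (upd f j b)
   = \sum_(p <- [seq (upd p.1 p.2 b, p.2) | p <- PL]) F p.1.
  rewrite big_map big_allpairs_dep; apply: eq_bigr => f _.
  by rewrite big_filter.
have -> : (\sum_(g <- OrbP (b :: Q)) F g) *+ count_mem b (b :: Q)
   = \sum_(p <- PL') F p.1.
  rewrite big_allpairs_dep -sumrMnl; apply: eq_big_seq => g.
  rewrite memOrb => Hg; rewrite big_filter.
  rewrite (eq_bigr (fun=> F g)) // sum_const_cnt; congr (_ *+ _).
  by move/seq.permP: Hg => Hg; rewrite -(Hg (pred1 b)) /cod count_map.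
apply: perm_big; apply: uniq_perm.
- rewrite map_inj_in_uniq.
    apply: allpairs_uniq_dep; first exact: uniq_OrbP.
      by move=> f _; rewrite filter_uniq // enum_uniq.
    by move=> [x1 y1] [x2 y2] _ _ /= [-> ->].
  move=> [f1 j1] [f2 j2] H1 H2 /= [E1 E2]; subst j2.
  rewrite !memPL in H1 H2; case/andP: H1 => _ /eqP H1; case/andP: H2 => _ /eqP H2.
  congr (_, _); apply/ffunP => i.
  have := congr1 (fun g : ffT => g i) E1; rewrite !ffunE.
  by case: eqP => [-> _|//]; rewrite H1 H2.
- apply: allpairs_uniq_dep; first exact: uniq_OrbP.
    by move=> f _; rewrite filter_uniq // enum_uniq.
  by move=> [x1 y1] [x2 y2] _ _ /= [-> ->].
move=> [g j]; apply/mapP/idP.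
  move=> [[f j'] Hp [-> ->]] /=; rewrite memPL in Hp; case/andP: Hp => Hf /eqP Hj.
  rewrite memPL ffunE eqxx eqxx andbT.
  by apply: orb_upd Hj; rewrite (permPr HP) in Hf.
rewrite memPL => /andP[Hg /eqP Hj].
exists (upd g j l, j); last first.
  congr (_, _); apply/ffunP => i; rewrite !ffunE; case: eqP => [->|//].
  by rewrite Hj.
rewrite memPL ffunE eqxx eqxx andbT (permPr HP).
exact: orb_upd Hg Hj.
Qed.

Lemma G_zero (V : nmodType) (G : ffT -> 'I_n -> V) P (l : triple) : l \notin P ->
  \sum_(f <- OrbP P) \sum_(j <- enum 'I_n | f j == l) G f j = 0.
Proof.
move=> Hl; rewrite big_seq big1 // => f; rewrite memOrb => Hf.
rewrite big1 // => j /eqP Hj; exfalso; move/negP: Hl; apply.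
by rewrite -(perm_mem Hf) -Hj; apply: map_f; rewrite mem_enum.
Qed.

Lemma sum_part (V : nmodType) (f : ffT) (Vs : seq triple) (H : 'I_n -> V) :
  uniq Vs -> (forall j, f j \in Vs) ->
  \sum_(j <- enum 'I_n) H j = \sum_(l <- Vs) \sum_(j <- enum 'I_n | f j == l) H j.
Proof.
move=> HV Hf.
rewrite [RHS](eq_bigr (fun l => \sum_(j <- enum 'I_n) (if f j == l then H j else 0))); last first.
  by move=> l _; rewrite big_mkcond.
rewrite [RHS]exchange_big; apply: eq_bigr => j _; rewrite -big_mkcond /=.
rewrite (big_rem (f j)) //= eqxx big_seq_cond big1 ?addr0 // => l.
rewrite mem_rem_uniq // inE => /andP[/andP[Hne _] /eqP Heq].
by rewrite Heq eqxx in Hne.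
Qed.


Definition padL (L : seq triple) := L ++ nseq (n - size L) z0.

Lemma nth_padL L t : nth z0 (padL L) t = nth z0 L t.
Proof.
rewrite /padL nth_cat; case: ifP => // /negbT; rewrite -leqNgt => H.
by rewrite nth_nseq nth_default //; case: ifP.
Qed.

Lemma size_cod f : size (cod f) = n.
Proof. by rewrite size_map size_enum_ord. Qed.

Lemma cod_gfun P s : size P = n -> perm_eq (cod (gfun P s)) P.
Proof.
move=> HP.
have -> : cod (gfun P s) = [seq nth z0 P (val i) | i <- [seq (s^-1)%g i | i <- enum 'I_n]].
  by rewrite /cod -[RHS]map_comp; apply: eq_map => i; rewrite /= ffunE.
have E : [seq nth z0 P (val i) | i <- enum 'I_n] = P.
  by rewrite (map_comp (nth z0 P) val) val_enum_ord -HP -/(mkseq _ _) mkseq_nth.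
rewrite -[X in perm_eq _ X]E.
apply: perm_map; apply: uniq_perm.
- by rewrite map_inj_uniq ?enum_uniq //; apply: perm_inj.
- exact: enum_uniq.
move=> i; rewrite mem_enum; apply/mapP; exists (s i); first by rewrite mem_enum.
by rewrite permK.
Qed.

Lemma Orb_zero (V : nmodType) (G : ffT -> V) :
  \sum_(f <- OrbP (nseq n z0)) G f = G [ffun => z0].
Proof.
have -> : G [ffun => z0] = \sum_(f <- [:: [ffun => z0]]) G f by rewrite big_seq1.
apply: perm_big; apply: uniq_perm; rewrite ?uniq_OrbP // => f.
rewrite memOrb inE; apply/idP/eqP => [Hf|->].
  apply/ffunP => i; rewrite ffunE.
  have : f i \in nseq n z0 by rewrite -(perm_mem Hf); apply: map_f; rewrite mem_enum.
  by rewrite mem_nseq => /andP[_ /eqP].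
suff -> : cod [ffun => z0] = nseq n z0 by [].
apply: (@eq_from_nth _ z0); first by rewrite size_cod size_nseq.
move=> i; rewrite size_cod => Hi; rewrite nth_nseq Hi (nth_map (Ordinal Hi)) ?size_enum_ord //.
by rewrite ffunE.
Qed.

End Comb.

Lemma varidx_eq n (k k' : 'I_3) (i j : 'I_n) :
  (varidx k i == varidx k' j) = (k == k') && (i == j).
Proof.
apply/eqP/andP => [/(congr1 val) /= H|[/eqP -> /eqP ->] //].
have n0 : (0 < n)%N by case: i {H} => i /= /(leq_ltn_trans (leq0n i)).
have Hm := congr1 (modn^~ n) H; have Hd := congr1 (divn^~ n) H; simpl in Hm, Hd.
rewrite !modnMDl !modn_small // in Hm.
rewrite !divnMDl // !divn_small // !addn0 in Hd.
by split; apply/eqP; apply: val_inj.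
Qed.

Lemma mnmMnE n (v w : 'I_n) (p : nat) : ((U_(v) *+ p)%MM w = (v == w) * p)%N.
Proof. by rewrite mulmnE mnm1E. Qed.

Section Poly.
Variable R : realType.
Variable n : nat.
Local Notation Pol := {mpoly R[i][3 * n]}.
Local Notation ffT := {ffun 'I_n -> triple}.
Local Notation z0 := ((0,0,0)%N : triple).

Definition blk (j : 'I_n) (t : triple) : Pol :=
  xv R j ^+ t.1.1 * yv R j ^+ t.1.2 * zv R j ^+ t.2.
Definition mono (f : ffT) : Pol := \prod_(i < n) blk i (f i).

Definition mexp (f : ffT) : 'X_{1.. 3 * n} :=
  (\sum_(i < n) (U_(varidx (0%R : 'I_3) i) *+ (f i).1.1 + U_(varidx (1%R : 'I_3) i) *+ (f i).1.2
                 + U_(varidx (2%R : 'I_3) i) *+ (f i).2))%MM.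

Lemma mono_X f : mono f = 'X_[mexp f].
Proof.
rewrite /mexp /mono (big_morph (fun m : 'X_{1.. 3 * n} => ('X_[m] : Pol)) (@mpolyXD _ _) (@mpolyX0 _ _)).
apply: eq_bigr => i _; rewrite /blk !mpolyXD -!mpolyXn.
by rewrite /xv /yv /zv.
Qed.

Lemma mexpE f (k : 'I_3) j : mexp f (varidx k j) =
  ((k == 0%R) * (f j).1.1 + (k == 1%R) * (f j).1.2 + (k == 2%R) * (f j).2)%N.
Proof.
rewrite /mexp mnm_sumE (bigD1 j) //= big1 => [|i Hij].
  by rewrite !mnmDE !mnmMnE !varidx_eq eqxx !andbT addn0 ![_ == k]eq_sym.
by rewrite !mnmDE !mnmMnE !varidx_eq (negbTE Hij) !andbF.
Qed.

Lemma mono_inj : injective mono.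
Proof.
move=> f g; rewrite !mono_X => H.
have Hm : mexp f = mexp g.
  have := congr1 (mcoeff (mexp f)) H; rewrite !mcoeffX eqxx.
  by case: eqP => // _ /eqP; rewrite oner_eq0.
apply/ffunP => j.
have := congr1 (fun m : 'X_{1.. 3 * n} => m (varidx 0 j)) Hm.
have := congr1 (fun m : 'X_{1.. 3 * n} => m (varidx 1 j)) Hm.
have := congr1 (fun m : 'X_{1.. 3 * n} => m (varidx 2 j)) Hm.
rewrite /= !mexpE /=.
by case: (f j) => [[? ?] ?]; case: (g j) => [[? ?] ?] /=; rewrite !mul1n !mul0n ?addn0 ?add0n => -> -> ->.
Qed.


Lemma blk0 j : blk j z0 = 1.
Proof. by rewrite /blk /= !expr0 !mulr1. Qed.

Definition tadd (s t : triple) : triple := (s.1.1 + t.1.1, s.1.2 + t.1.2, s.2 + t.2)%N.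

Lemma blk_add j s t : blk j (tadd s t) = blk j s * blk j t.
Proof. rewrite /blk /tadd /= !exprD; ring. Qed.

Lemma mono_split (f : ffT) j : mono f = blk j (f j) * \prod_(i < n | i != j) blk i (f i).
Proof. by rewrite /mono (bigD1 j). Qed.

Lemma mono_upd (f : ffT) j t : mono (upd f j t) = blk j t * \prod_(i < n | i != j) blk i (f i).
Proof.
rewrite (mono_split _ j) ffunE eqxx; congr (_ * _); apply: eq_bigr => i /negbTE Hi.
by rewrite ffunE Hi.
Qed.

Lemma mono_mul (f : ffT) j s : blk j s * mono f = mono (upd f j (tadd s (f j))).
Proof. by rewrite mono_upd blk_add (mono_split f j) mulrA. Qed.

Lemma permmono_gfun L s : permmono R L s = mono (gfun (padL n L) s).
Proof.
rewrite /mono (reindex_inj (@perm_inj _ s)) /permmono big_mkcond /=.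
apply: eq_bigr => t _; rewrite ffunE permK nth_padL.
case: ifP => // /negbT; rewrite -leqNgt => H.
by rewrite nth_default // blk0.
Qed.

Lemma mLam_Orb L : mLam R n L = \sum_(f <- OrbP n (padL n L)) mono f.
Proof.
rewrite /mLam; case: ifP => HL.
  have -> : [seq permmono R L s | s : 'S_n] =
            [seq mono f | f <- [seq gfun (padL n L) s | s <- enum {perm 'I_n}]].
    rewrite -map_comp; apply: eq_map => s /=; exact: permmono_gfun.
  rewrite (undup_map_inj mono_inj) big_map /OrbP (all_filterP _) //.
  apply/allP => f; rewrite mem_undup => /mapP[s _ ->]; apply: cod_gfun.
  by rewrite size_cat size_nseq subnKC.
rewrite /OrbP big_filter big1 // => f Hf; exfalso.
move/perm_size: Hf; rewrite size_cod size_cat size_nseq.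
move/negbT: HL; rewrite -ltnNge => H1 H2.
have H3 : (n - size L = 0)%N by apply/eqP; rewrite subn_eq0 ltnW.
by rewrite H3 addn0 in H2; rewrite -H2 ltnn in H1.
Qed.

Lemma step1 (al : triple) : (0 < n)%N -> al != z0 ->
  mLam R n [:: al] = \sum_(j <- enum 'I_n) blk j al.
Proof.
move=> n0 Hal; rewrite mLam_Orb /padL /=.
have Hp : perm_eq (nseq n z0) (z0 :: nseq (n - 1) z0).
  by rewrite subn1 -{1}(prednK n0).
have Hc : count_mem al (al :: nseq (n - 1) z0) = 1%N.
  by rewrite /= eqxx count_nseq /= eq_sym (negbTE Hal).
have := G_abs mono Hp Hal; rewrite Hc mulr1n Orb_zero => <-.
rewrite big_mkcond; apply: eq_bigr => j _; rewrite ffunE eqxx mono_upd big1 ?mulr1 // => i _.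
by rewrite ffunE blk0.
Qed.


Lemma in_In0 r : in_In r (0 : Pol).
Proof. by exists (fun=> 0); rewrite big1 // => i _; rewrite mul0r. Qed.

Lemma in_In_add r (p1 p2 : Pol) : in_In r p1 -> in_In r p2 -> in_In r (p1 + p2).
Proof.
move=> [q1 ->] [q2 ->]; exists (fun i => q1 i + q2 i); rewrite -big_split.
by apply: eq_bigr => i _; rewrite mulrDl.
Qed.

Lemma in_In_sum r (I : Type) (s : seq I) (P : pred I) (F : I -> Pol) :
  (forall i, P i -> in_In r (F i)) -> in_In r (\sum_(i <- s | P i) F i).
Proof. by move=> H; apply: big_ind => //; [exact: in_In0 | exact: in_In_add]. Qed.

Lemma in_In_term r (f : ffT) j p q s : (r <= s)%N ->
  in_In r (mono (upd f j (p, q, s)) - mono (upd f j (p + 1, q + 1, s - r)%N)).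
Proof.
move=> Hrs; set K := \prod_(i < n | i != j) blk i (f i).
exists (fun i => if i == j then - (blk j (p, q, s - r)%N * K) else 0).
rewrite (bigD1 j) //= eqxx big1 ?addr0 => [|i /negbTE ->]; last by rewrite mul0r.
rewrite !mono_upd -/K /blk /= -{1}(subnK Hrs) exprD !addn1 !exprS; ring.
Qed.

Lemma Wl L (l be : triple) : l \in L -> be != l -> be != z0 ->
  \sum_(f <- OrbP n (padL n L)) \sum_(j <- enum 'I_n | f j == l) mono (upd f j be)
  = (count_mem be L).+1%:R * mLam R n (be :: rem l L).
Proof.
move=> Hl Hbl Hbz.
set Q := rem l L ++ nseq (n - size L) z0.
have Hp : perm_eq (padL n L) (l :: Q) by rewrite /padL /Q -cat_cons perm_cat2r perm_to_rem.
rewrite (G_abs mono Hp Hbl) mulr_natl.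
have Hs : (size (rem l L)).+1 = size L by rewrite (perm_size (perm_to_rem Hl)).
congr (_ *+ _); first by rewrite mLam_Orb /padL /= Hs.
rewrite /= eqxx count_cat count_nseq /= eq_sym (negbTE Hbz) mul0n addn0.
move/seq.permP: (perm_to_rem Hl) => /(_ (pred1 be)) /= ->.
by rewrite eq_sym (negbTE Hbl) add1n.
Qed.

Lemma W0 L al : z0 \notin L -> al != z0 -> (size L <= n)%N ->
  \sum_(f <- OrbP n (padL n L)) \sum_(j <- enum 'I_n | f j == z0) mono (upd f j al)
  = (count_mem al L).+1%:R * mLam R n (al :: L).
Proof.
move=> Hz Hal; case: (ltnP (size L) n) => HLn HL.
  set Q := L ++ nseq (n - size L).-1 z0.
  have Hp : perm_eq (padL n L) (z0 :: Q).
    have Hgt : (0 < n - size L)%N by rewrite subn_gt0.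
    rewrite /padL /Q -{1}(prednK Hgt) /=.
    by rewrite perm_catC /= perm_cons perm_catC perm_refl.
  rewrite (G_abs mono Hp Hal) mulr_natl; congr (_ *+ _).
    by rewrite mLam_Orb /padL /= subnS.
  by rewrite /= eqxx count_cat count_nseq /= eq_sym (negbTE Hal) mul0n addn0 add1n.
have HLe : size L = n by apply/eqP; rewrite eqn_leq HL HLn.
rewrite G_zero; last by rewrite /padL HLe subnn cats0.
by rewrite /mLam /= HLe ltnn mulr0.
Qed.

Lemma ne_add (a b c : nat) (l : triple) : (a, b, c) != z0 ->
  (a + l.1.1, b + l.1.2, c + l.2)%N != l.
Proof.
move=> Hal; apply/eqP; case: l => [[p q] s] /= [H1 H2 H3].
move/eqP: Hal; apply; congr (_, _, _); lia.
Qed.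

Lemma ne_add0 (a b c : nat) (l : triple) : (a, b, c) != z0 ->
  (a + l.1.1, b + l.1.2, c + l.2)%N != z0.
Proof.
move=> Hal; apply/eqP; case: l => [[p q] s] /= [H1 H2 H3].
move/eqP: Hal; apply; congr (_, _, _); lia.
Qed.

Lemma ne_red (a b c r : nat) (l : triple) : (a + l.1.1 + 1, b + l.1.2 + 1, c + l.2 - r)%N != l.
Proof. by apply/eqP; case: l => [[p q] s] /= [H1 H2 H3]; lia. Qed.

Lemma ne_red0 (a b c r : nat) (l : triple) : (a + l.1.1 + 1, b + l.1.2 + 1, c + l.2 - r)%N != z0.
Proof. by apply/eqP; case: l => [[p q] s] /= [H1 H2 H3]; lia. Qed.


Lemma main_eq r a b c L : (0 < r)%N -> (a, b, c) != z0 -> z0 \notin L ->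
  (0 < n)%N -> (size L <= n)%N ->
  mLam R n [:: (a, b, c)] * mLam R n L =
   (count_mem (a, b, c) L).+1%:R * mLam R n ((a, b, c) :: L)
   + \sum_(t <- undup L | (c + t.2 <= r - 1)%N)
        (count_mem (a + t.1.1, b + t.1.2, c + t.2)%N L).+1%:R
        * mLam R n ((a + t.1.1, b + t.1.2, c + t.2)%N :: rem t L)
   + \sum_(t <- undup L | (r <= c + t.2)%N)
        (count_mem (a + t.1.1 + 1, b + t.1.2 + 1, c + t.2 - r)%N L).+1%:R
        * mLam R n ((a + t.1.1 + 1, b + t.1.2 + 1, c + t.2 - r)%N :: rem t L)
   + \sum_(t <- undup L | (r <= c + t.2)%N)
       \sum_(f <- OrbP n (padL n L)) \sum_(j <- enum 'I_n | f j == t)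
          (mono (upd f j (a + t.1.1, b + t.1.2, c + t.2)%N)
           - mono (upd f j (a + t.1.1 + 1, b + t.1.2 + 1, c + t.2 - r)%N)).
Proof.
move=> r0 Hal Hz n0 HL.
have E1 : mLam R n [:: (a, b, c)] * mLam R n L =
    \sum_(f <- OrbP n (padL n L)) \sum_(j <- enum 'I_n)
        mono (upd f j (tadd (a, b, c) (f j))).
  rewrite step1 // (mLam_Orb L) big_distrl /=.
  under eq_bigr do rewrite big_distrr /=.
  rewrite exchange_big /=; apply: eq_bigr => f _; apply: eq_bigr => j _.
  exact: mono_mul.
have E2 : \sum_(f <- OrbP n (padL n L)) \sum_(j <- enum 'I_n)
        mono (upd f j (tadd (a, b, c) (f j))) =
   \sum_(l <- z0 :: undup L) \sum_(f <- OrbP n (padL n L))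
        \sum_(j <- enum 'I_n | f j == l) mono (upd f j (tadd (a, b, c) l)).
  rewrite [RHS]exchange_big; apply: eq_big_seq => f; rewrite memOrb => Hf.
  rewrite (sum_part (f := f) (Vs := z0 :: undup L)).
  - by apply: eq_bigr => l _; apply: eq_bigr => j /eqP ->.
  - by rewrite /= mem_undup Hz undup_uniq.
  move=> j; have : f j \in padL n L.
    by rewrite -(perm_mem Hf); apply: map_f; rewrite mem_enum.
  rewrite /padL mem_cat mem_nseq !inE mem_undup.
  by case/orP => [->|/andP[_ ->]]; rewrite ?orbT.
rewrite E1 E2 big_cons.
rewrite (_ : tadd (a, b, c) z0 = (a, b, c)); last by rewrite /tadd /= !addn0.
rewrite W0 // (bigID (fun t : triple => (c + t.2 <= r - 1)%N)) /= -!addrA.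
congr (_ + (_ + _)).
  rewrite big_seq_cond [in RHS]big_seq_cond; apply: eq_big => [l //|l /andP[Hl _]].
  rewrite mem_undup in Hl.
  by rewrite Wl // ?ne_add ?ne_add0.
rewrite -big_split big_seq_cond [in RHS]big_seq_cond /=.
apply: eq_big => [l|l /andP[Hl _]].
  congr (_ && _); rewrite -ltnNge; case: (r) r0 => // r' _.
  by rewrite subSS subn0.
rewrite mem_undup in Hl.
rewrite -Wl // ?ne_red ?ne_red0 // -big_split; apply: eq_bigr => f _.
rewrite -big_split; apply: eq_bigr => j _.
by rewrite /= addrC subrK.
Qed.

End Poly.

Unset Implicit Arguments.
Set Strict Implicit.

Theorem lemma1 (R : realType) (r a b c : nat) (L : seq triple) :
  (0 < r)%N ->
  (a, b, c) != (0, 0, 0)%N ->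
  (0, 0, 0)%N \notin L ->
  forall n : nat, (0 < n)%N ->
  in_In r
    (mLam R n [:: (a, b, c)] * mLam R n L
     - ( (count_mem (a, b, c) L).+1%:R * mLam R n ((a, b, c) :: L)
       + \sum_(t <- undup L | (c + t.2 <= r - 1)%N)
            (count_mem (a + t.1.1, b + t.1.2, c + t.2)%N L).+1%:R
            * mLam R n ((a + t.1.1, b + t.1.2, c + t.2)%N :: rem t L)
       + \sum_(t <- undup L | (r <= c + t.2)%N)
            (count_mem (a + t.1.1 + 1, b + t.1.2 + 1, c + t.2 - r)%N L).+1%:R
            * mLam R n ((a + t.1.1 + 1, b + t.1.2 + 1, c + t.2 - r)%N :: rem t L))).
Proof.
move=> r0 Hal Hz n n0.
case: (leqP (size L) n) => HL.
  rewrite (@main_eq R n r a b c L) // addrC addKr.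
  apply: in_In_sum => t Ht; apply: in_In_sum => f _; apply: in_In_sum => j _.
  exact: in_In_term.
have Z : forall L', (n < size L')%N -> mLam R n L' = 0.
  by move=> L' H; rewrite /mLam leqNgt H.
rewrite (Z L) // (Z ((a, b, c) :: L)) /=; last exact: ltnW.
rewrite big1_seq => [|t /andP[_ Ht]]; last first.
  rewrite mem_undup in Ht; rewrite Z ?mulr0 //=.
  by rewrite -[(size (rem t L)).+1]/(size (t :: rem t L)) -(perm_size (perm_to_rem Ht)).
rewrite big1_seq => [|t /andP[_ Ht]]; last first.
  rewrite mem_undup in Ht; rewrite Z ?mulr0 //=.
  by rewrite -[(size (rem t L)).+1]/(size (t :: rem t L)) -(perm_size (perm_to_rem Ht)).
rewrite !mulr0 !addr0 subr0; exact: in_In0.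
Qed.
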